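(* The bidual $\mathcal R^{**}$ of Read's space $\mathcal R=(c_0,|||\cdot|||)$ is strictly convex; that is, for all $\bar x,\bar y$ in the unit sphere of $\mathcal R^{**}$ with $\bar x\ne\bar y$ one has $|||\bar x+\bar y|||<2$ (bidual norm).
   Context: Let $c_{00}(\mathbb Q)$ be the set of finitely supported sequences with rational coefficients, and let $(u_n)_{n\in\mathbb N}$ be a sequence in $c_{00}(\mathbb Q)$ which lists every element of $c_{00}(\mathbb Q)$ infinitely many times. Let $(a_n)_{n\in\mathbb N}$ be a strictly increasing sequence of positive integers with $a_n>\max\operatorname{supp} u_n$ and $a_n>\|u_n\|_1$ for every $n$. $(e_n)$ denotes the canonical unit vectors and $\langle x,y\rangle=\sum_n x_ny_n$. Read's norm on $c_0$ is $|||x||| = \|x\|_\infty + \sum_{n} 2^{-a_n^2}|\langle x, u_n - e_{a_n}\rangle|$, and Read's space is $\mathcal R=(c_0,|||\cdot|||)$ (real scalars). A Banach space is strictly convex if its unit sphere contains no nontrivial segment. *)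

(* Defs.v *)
From Stdlib Require Import Reals QArith Qreals.
From Coquelicot Require Import Coquelicot.
Open Scope R_scope.

Fixpoint fsum (f : nat -> R) (n : nat) : R :=
  match n with O => 0 | S m => fsum f m + f m end.

Definition c0 (x : nat -> R) : Prop := is_lim_seq x 0.

Definition sup_norm (x : nat -> R) : R :=
  real (Lub_Rbar (fun r => exists k, r = Rabs (x k))).

(* <x, u_n - e_{a_n}>, where supp u_n lies below a_n *)
Definition read_pair (a : nat -> nat) (u : nat -> nat -> Q) (x : nat -> R) (n : nat) : R :=
  fsum (fun k => x k * Q2R (u n k)) (a n) - x (a n).

Definition read_norm (a : nat -> nat) (u : nat -> nat -> Q) (x : nat -> R) : R :=
  sup_norm x + Series (fun n => / 2 ^ (a n * a n) * Rabs (read_pair a u x n)).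

Definition c00Q (v : nat -> Q) : Prop := exists N, forall k, (N <= k)%nat -> (v k == 0)%Q.

Definition read_data (a : nat -> nat) (u : nat -> nat -> Q) : Prop :=
  (forall v : nat -> Q, c00Q v -> forall m, exists n, (m <= n)%nat /\ forall k, (u n k == v k)%Q) /\
  (forall n, (0 < a n)%nat) /\ (forall n, (a n < a (S n))%nat) /\
  (forall n k, ~ (u n k == 0)%Q -> (k < a n)%nat) /\
  (forall n, fsum (fun k => Rabs (Q2R (u n k))) (a n) < INR (a n)).

(* Dual R^* : bounded linear functionals on (c_0, |||.|||) (only their values on c_0 matter) *)
Definition dual_elt a u (f : (nat -> R) -> R) : Prop :=
  (forall x y (al be : R), c0 x -> c0 y ->
      f (fun k => al * x k + be * y k) = al * f x + be * f y) /\
  (exists C, forall x, c0 x -> Rabs (f x) <= C * read_norm a u x).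

Definition dual_norm a u (f : (nat -> R) -> R) : R :=
  real (Lub_Rbar (fun r => exists x, c0 x /\ read_norm a u x <= 1 /\ r = Rabs (f x))).

Definition bidual_elt a u (P : ((nat -> R) -> R) -> R) : Prop :=
  (forall f g (al be : R), dual_elt a u f -> dual_elt a u g ->
      P (fun x => al * f x + be * g x) = al * P f + be * P g) /\
  (exists C, forall f, dual_elt a u f -> Rabs (P f) <= C * dual_norm a u f).

Definition bidual_norm a u (P : ((nat -> R) -> R) -> R) : R :=
  real (Lub_Rbar (fun r => exists f, dual_elt a u f /\ dual_norm a u f <= 1 /\ r = Rabs (P f))).

Definition bidual_eq a u (P Q : ((nat -> R) -> R) -> R) : Prop :=
  forall f, dual_elt a u f -> P f = Q f.

(* Main.v *)
Require Import Defs.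
From Stdlib Require Import Reals QArith Qreals.
From Coquelicot Require Import Coquelicot.
From Stdlib Require Import Lia Lra FunctionalExtensionality Classical.
Open Scope R_scope.

Lemma fsum_ext f g n : (forall k, (k < n)%nat -> f k = g k) -> fsum f n = fsum g n.
Proof. induction n; simpl; intros H; [reflexivity|]. rewrite IHn, H; [reflexivity|lia|intros; apply H; lia]. Qed.

Lemma fsum_plus f g n : fsum (fun k => f k + g k) n = fsum f n + fsum g n.
Proof. induction n; simpl; [lra|]. rewrite IHn; ring. Qed.

Lemma fsum_scal c f n : fsum (fun k => c * f k) n = c * fsum f n.
Proof. induction n; simpl; [ring|]. rewrite IHn; ring. Qed.

Lemma fsum_le f g n : (forall k, (k < n)%nat -> f k <= g k) -> fsum f n <= fsum g n.
Proof. induction n; simpl; intros H; [lra|]. assert (H1 := H n (Nat.lt_succ_diag_r n)).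
 assert (fsum f n <= fsum g n) by (apply IHn; intros; apply H; lia). lra. Qed.

Lemma fsum_abs f n : Rabs (fsum f n) <= fsum (fun k => Rabs (f k)) n.
Proof. induction n; simpl. rewrite Rabs_R0; lra.
 eapply Rle_trans. apply Rabs_triang. lra. Qed.

Lemma fsum_nonneg f n : (forall k, 0 <= f k) -> 0 <= fsum f n.
Proof. intros H; induction n; simpl; [lra|]. specialize (H n); lra. Qed.

Lemma fsum_mono f m n : (forall k, 0 <= f k) -> (m <= n)%nat -> fsum f m <= fsum f n.
Proof. intros H Hmn; induction Hmn; [lra|]. simpl. specialize (H m0); lra. Qed.

Lemma fsum_delta c i n : fsum (fun k => if Nat.eqb k i then c else 0) n = if Nat.ltb i n then c else 0.
Proof. induction n; simpl. destruct i; reflexivity.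
 rewrite IHn. destruct (Nat.eqb_spec n i); destruct (Nat.ltb_spec i n); destruct (Nat.ltb_spec i (S n));
 try (exfalso; lia); lra. Qed.

Lemma fsum_sum_n f n : fsum f (S n) = sum_n f n.
Proof. induction n. simpl. rewrite sum_O. ring. rewrite sum_Sn. change (fsum f (S (S n))) with (fsum f (S n) + f (S n)).
 rewrite IHn. reflexivity. Qed.

Lemma ser_bounded a c : (forall n, 0 <= a n) -> (forall M, fsum a M <= c) -> ex_series a /\ Series a <= c.
Proof. intros Ha Hc.
 assert (Hinc : forall n, sum_n a n <= sum_n a (S n)).
 { intros n. rewrite <- !fsum_sum_n. apply fsum_mono; auto. }
 assert (Hb : forall n, sum_n a n <= c). { intros n; rewrite <- fsum_sum_n; auto. }
 destruct (ex_finite_lim_seq_incr _ _ Hinc Hb) as [l Hl].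
 assert (Hs : is_series a l) by exact Hl.
 split. exists l; exact Hs.
 rewrite (is_series_unique _ _ Hs).
 assert (H := is_lim_seq_le _ _ _ _ Hb Hl (is_lim_seq_const c)). simpl in H. exact H. Qed.

Lemma ser_ge_partial a M : (forall n, 0 <= a n) -> ex_series a -> fsum a M <= Series a.
Proof. intros Ha [l Hl]. rewrite (is_series_unique _ _ Hl).
 assert (Hl' : is_lim_seq (sum_n a) l) by exact Hl.
 apply (is_lim_seq_incr_n _ M) in Hl'.
 assert (Hle : forall n, fsum a M <= sum_n a (n + M)).
 { intros n. rewrite <- fsum_sum_n. apply fsum_mono; auto. lia. }
 assert (H := is_lim_seq_le (fun _ => fsum a M) _ _ _ Hle (is_lim_seq_const _) Hl'). simpl in H; exact H. Qed.

Lemma ser_nonneg a : (forall n, 0 <= a n) -> ex_series a -> 0 <= Series a.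
Proof. intros. apply (ser_ge_partial a 0); auto. Qed.

Lemma ser_term_le a n : (forall n, 0 <= a n) -> ex_series a -> a n <= Series a.
Proof. intros Ha He. eapply Rle_trans; [|apply (ser_ge_partial a (S n)); auto]. simpl.
 assert (0 <= fsum a n) by (apply fsum_nonneg; auto). lra. Qed.

Lemma lub_le0 (E : R -> Prop) M : 0 <= M -> (forall r, E r -> r <= M) -> real (Lub_Rbar E) <= M.
Proof. intros H0 H. destruct (Lub_Rbar_correct E) as [H1 H2].
 assert (H3 := H2 M H). set (l := Lub_Rbar E) in *. clearbody l. destruct l; simpl in *; auto; contradiction. Qed.

Lemma lub_ge (E : R -> Prop) M r : (forall r, E r -> r <= M) -> E r -> r <= real (Lub_Rbar E).
Proof. intros H Hr. destruct (Lub_Rbar_correct E) as [H1 H2].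
 assert (H3 := H2 M H). assert (H4 := H1 r Hr). set (l := Lub_Rbar E) in *. clearbody l. destruct l; simpl in *; auto; contradiction. Qed.

Lemma lub_approx (E : R -> Prop) M r0 eps : (forall r, E r -> r <= M) -> E r0 -> 0 < eps ->
  exists r, E r /\ real (Lub_Rbar E) - eps < r.
Proof. intros H Hr eps0. destruct (Lub_Rbar_correct E) as [H1 H2].
 assert (H3 := H2 M H). assert (H4 := H1 r0 Hr). set (l := Lub_Rbar E) in *. clearbody l.
 destruct l as [l| |]; simpl in *; try contradiction.
 destruct (Classical_Prop.classic (exists r, E r /\ l - eps < r)) as [Hc|Hc]; auto.
 exfalso. assert (Hub : is_ub_Rbar E (l - eps)).
 { intros x Ex. simpl. destruct (Rle_dec x (l - eps)); auto. exfalso; apply Hc; exists x; split; auto; lra. }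
 specialize (H2 _ Hub). simpl in H2. lra. Qed.

Lemma pow_bound_aux A : (1 <= A)%nat -> (INR A + 1) * (2 ^ A * 2 ^ A) <= 4 * 2 ^ (A * A).
Proof. intros HA. induction HA. simpl. lra.
 assert (E : (S m * S m = m * m + (2 * m + 1))%nat) by lia. rewrite E, pow_add. rewrite S_INR. simpl (2 ^ S m).
 assert (H8 : 8 <= 2 ^ (2 * m + 1)). { replace 8 with (2 ^ 3) by (simpl; ring). apply Rle_pow; lra || lia. }
 assert (HA1 : 1 <= INR m) by (apply (le_INR 1); lia).
 assert (Hp : 0 < 2 ^ m) by (apply pow_lt; lra).
 assert (Hq : 0 < 2 ^ (m * m)) by (apply pow_lt; lra).
 assert (Hs : 0 < 2 ^ m * 2 ^ m) by (apply Rmult_lt_0_compat; auto).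
 assert (H1: (INR m + 1 + 1) * (2 * 2 ^ m * (2 * 2 ^ m)) <= 8 * ((INR m + 1) * (2 ^ m * 2 ^ m))) by nra.
 assert (H2: 8 * ((INR m + 1) * (2 ^ m * 2 ^ m)) <= 8 * (4 * 2 ^ (m * m))) by lra.
 assert (H3: 8 * (4 * 2 ^ (m * m)) <= 4 * (2 ^ (m * m) * 2 ^ (2 * m + 1))) by nra.
 lra. Qed.

Lemma pow_half_pos n : 0 < (/ 2) ^ n.
Proof. apply pow_lt; lra. Qed.

Lemma pow_half_mono m n : (m <= n)%nat -> (/2) ^ n <= (/2) ^ m.
Proof. intros H; induction H; [lra|]. simpl. assert (0 < (/2)^m0) by apply pow_half_pos. lra. Qed.

Lemma w_bound A : (1 <= A)%nat -> / 2 ^ (A * A) * (INR A + 1) <= 4 * ((/ 2) ^ A * (/ 2) ^ A).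
Proof. intros HA. assert (H := pow_bound_aux A HA). rewrite !pow_inv.
 assert (Hp : 0 < 2 ^ A) by (apply pow_lt; lra).
 assert (Hq : 0 < 2 ^ (A * A)) by (apply pow_lt; lra).
 rewrite <- Rinv_mult. apply Rmult_le_reg_l with (2 ^ (A * A)); auto.
 apply Rmult_le_reg_l with (2 ^ A * 2 ^ A); [nra|].
 field_simplify; try lra. Qed.

Lemma a_ge a u : read_data a u -> forall n, (n < a n)%nat.
Proof. intros (Hu & Ha0 & Hinc & Hs & Hl). induction n. apply Ha0. specialize (Hinc n). lia. Qed.

Definition wt (a : nat -> nat) (n : nat) : R := / 2 ^ (a n * a n).

Lemma wt_pos a n : 0 < wt a n.
Proof. unfold wt. apply Rinv_0_lt_compat, pow_lt; lra. Qed.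

Lemma term_bound a u : read_data a u -> forall K n, (K <= a n)%nat ->
  wt a n * (INR (a n) + 1) <= 4 * (/2)^K * (/2)^n.
Proof. intros H K n HK. assert (Hn := a_ge a u H n). unfold wt.
 eapply Rle_trans. apply w_bound; lia.
 assert (H1 := pow_half_mono _ _ HK). assert (H2 := pow_half_mono n (a n) ltac:(lia)).
 assert (H3 := pow_half_pos (a n)). assert (H4 := pow_half_pos n). nra. Qed.

Lemma geom_ser K c : 0 <= c -> (forall n, 0 <= c * 4 * (/2)^K * (/2)^n) /\
   ex_series (fun n => c * 4 * (/2)^K * (/2)^n) /\ Series (fun n => c * 4 * (/2)^K * (/2)^n) = 8 * c * (/2)^K.
Proof. intros Hc. assert (HK := pow_half_pos K). split; [intros n; assert (H := pow_half_pos n); repeat apply Rmult_le_pos; lra|].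
 assert (Hg : Rabs (/2) < 1) by (rewrite Rabs_right; lra).
 assert (Hs := is_series_geom _ Hg).
 split. exists (c * 4 * (/2)^K * / (1 - /2)). apply (is_series_scal_l (c * 4 * (/2)^K)) in Hs. exact Hs.
 rewrite Series_scal_l. rewrite Series_geom; auto. field. Qed.

Lemma tail_ser a u : read_data a u -> forall K B (t : nat -> R), 0 <= B ->
  (forall n, 0 <= t n) -> (forall n, t n <= wt a n * (B * (INR (a n) + 1))) -> (forall n, (a n < K)%nat -> t n = 0) ->
  ex_series t /\ Series t <= 8 * B * (/2)^K.
Proof. intros H K B t HB Ht0 Ht HtK. destruct (geom_ser K B HB) as (G0 & G1 & G2).
 assert (Hle : forall n, 0 <= t n <= B * 4 * (/ 2) ^ K * (/ 2) ^ n).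
 { intros n. split; auto. destruct (Compare_dec.le_lt_dec K (a n)) as [h|h].
   - eapply Rle_trans. apply Ht. assert (Hw := term_bound a u H K n h). assert (Hw0 := wt_pos a n).
     replace (wt a n * (B * (INR (a n) + 1))) with (B * (wt a n * (INR (a n) + 1))) by ring.
     replace (B * 4 * (/ 2) ^ K * (/ 2) ^ n) with (B * (4 * (/ 2) ^ K * (/ 2) ^ n)) by ring.
     apply Rmult_le_compat_l; auto.
   - rewrite HtK; auto. }
 split. apply (ex_series_le t (fun n => B * 4 * (/ 2) ^ K * (/ 2) ^ n)); auto. intros n. change (norm (t n)) with (Rabs (t n)). rewrite Rabs_right. apply Hle. apply Rle_ge, Hle.
 rewrite <- G2. apply Series_le; auto. Qed.

Lemma fsum_term f k n : (forall j, 0 <= f j) -> (k < n)%nat -> f k <= fsum f n.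
Proof. intros H Hk. induction Hk; simpl. assert (0 <= fsum f k) by (apply fsum_nonneg; auto). lra.
 specialize (H m). lra. Qed.

Lemma c0_bounded x : c0 x -> exists B, forall k, Rabs (x k) <= B.
Proof. intros Hx. apply is_lim_seq_spec in Hx. destruct (Hx (mkposreal 1 Rlt_0_1)) as [N HN]. simpl in HN.
 exists (fsum (fun k => Rabs (x k)) N + 1). intros k. destruct (Compare_dec.le_lt_dec N k) as [h|h].
 - specialize (HN k h). rewrite Rminus_0_r in HN. assert (0 <= fsum (fun k => Rabs (x k)) N) by (apply fsum_nonneg; intros; apply Rabs_pos). lra.
 - assert (H := fsum_term (fun k => Rabs (x k)) k N (fun j => Rabs_pos _) h). simpl in H. lra. Qed.

Lemma rp_bound a u : read_data a u -> forall z n B, (forall k, (k <= a n)%nat -> Rabs (z k) <= B) ->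
  Rabs (read_pair a u z n) <= B * (INR (a n) + 1).
Proof. intros H z n B Hz. destruct H as (Hu & Ha0 & Hinc & Hs & Hl).
 assert (HB : 0 <= B) by (eapply Rle_trans; [apply Rabs_pos| apply (Hz 0%nat); lia]).
 unfold read_pair. eapply Rle_trans. apply Rabs_triang. rewrite Rabs_Ropp.
 assert (H1 : Rabs (fsum (fun k => z k * Q2R (u n k)) (a n)) <= B * INR (a n)).
 { eapply Rle_trans. apply fsum_abs. eapply Rle_trans. apply (fsum_le _ (fun k => B * Rabs (Q2R (u n k)))).
   intros k hk. rewrite Rabs_mult. apply Rmult_le_compat_r. apply Rabs_pos. apply Hz; lia.
   rewrite fsum_scal. apply Rmult_le_compat_l; auto. left; apply Hl. }
 assert (H2 := Hz (a n) (le_n _)). lra. Qed.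

Lemma rp_ext a u z z' n : (forall k, (k <= a n)%nat -> z k = z' k) -> read_pair a u z n = read_pair a u z' n.
Proof. intros H. unfold read_pair. rewrite (fsum_ext _ (fun k => z' k * Q2R (u n k))). rewrite H; auto.
 intros k hk. rewrite H; auto; lia. Qed.

Lemma rp_lin a u x y al be n : read_pair a u (fun k => al * x k + be * y k) n = al * read_pair a u x n + be * read_pair a u y n.
Proof. unfold read_pair. rewrite (fsum_ext _ (fun k => al * (x k * Q2R (u n k)) + be * (y k * Q2R (u n k)))).
 rewrite fsum_plus, !fsum_scal. ring. intros; ring. Qed.

Definition nt a u x n := / 2 ^ (a n * a n) * Rabs (read_pair a u x n).

Lemma nt_nonneg a u x n : 0 <= nt a u x n.
Proof. unfold nt. apply Rmult_le_pos. left; apply (wt_pos a n). apply Rabs_pos. Qed.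

Lemma sup_ge x B k : (forall k, Rabs (x k) <= B) -> Rabs (x k) <= sup_norm x.
Proof. intros H. unfold sup_norm. apply (lub_ge _ B). intros r [j ->]; auto. exists k; auto. Qed.

Lemma sup_le x B : 0 <= B -> (forall k, Rabs (x k) <= B) -> sup_norm x <= B.
Proof. intros H0 H. unfold sup_norm. apply lub_le0; auto. intros r [j ->]; auto. Qed.

Lemma nser_ex a u : read_data a u -> forall x B, (forall k, Rabs (x k) <= B) ->
  ex_series (nt a u x) /\ Series (nt a u x) <= 8 * B.
Proof. intros H x B Hx. assert (HB : 0 <= B) by (eapply Rle_trans; [apply Rabs_pos|apply (Hx 0%nat)]).
 destruct (tail_ser a u H 0 B (nt a u x) HB (nt_nonneg a u x)) as [h1 h2].
 - intros n. unfold nt. apply Rmult_le_compat_l. left; apply (wt_pos a n). apply rp_bound; auto.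
 - intros n hn; lia.
 - split; auto. simpl in h2. lra. Qed.

Lemma rn_unfold a u x : read_norm a u x = sup_norm x + Series (nt a u x).
Proof. reflexivity. Qed.

Lemma rn_bounds a u : read_data a u -> forall x B, (forall k, Rabs (x k) <= B) ->
  0 <= sup_norm x /\ sup_norm x <= read_norm a u x /\ read_norm a u x <= 9 * B /\ 0 <= Series (nt a u x).
Proof. intros H x B Hx. destruct (nser_ex a u H x B Hx) as [h1 h2].
 assert (h3 := ser_nonneg _ (nt_nonneg a u x) h1).
 assert (HB : 0 <= B) by (eapply Rle_trans; [apply Rabs_pos|apply (Hx 0%nat)]).
 assert (h4 := sup_le x B HB Hx). assert (h5 := sup_ge x B 0 Hx). assert (h6 := Rabs_pos (x 0%nat)).
 rewrite rn_unfold. repeat split; lra. Qed.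

Lemma rn_ge_coord a u : read_data a u -> forall x B k, (forall k, Rabs (x k) <= B) -> Rabs (x k) <= read_norm a u x.
Proof. intros H x B k Hx. assert (h := sup_ge x B k Hx). destruct (rn_bounds a u H x B Hx) as (_&h2&_). lra. Qed.

Lemma sup_homog x B c : (forall k, Rabs (x k) <= B) -> sup_norm (fun k => c * x k) = Rabs c * sup_norm x.
Proof. intros Hx. assert (HB : 0 <= B) by (eapply Rle_trans; [apply Rabs_pos|apply (Hx 0%nat)]).
 assert (Hs0 : 0 <= sup_norm x) by (eapply Rle_trans; [apply Rabs_pos|apply (sup_ge x B 0%nat Hx)]).
 assert (Hcx : forall k, Rabs (c * x k) <= Rabs c * sup_norm x).
 { intros k. rewrite Rabs_mult. apply Rmult_le_compat_l. apply Rabs_pos. apply (sup_ge x B k Hx). }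
 apply Rle_antisym. apply sup_le; auto. apply Rmult_le_pos; auto. apply Rabs_pos.
 destruct (Req_dec c 0) as [->|hc]. rewrite Rabs_R0, Rmult_0_l. eapply Rle_trans; [apply Rabs_pos|apply (sup_ge _ _ 0%nat Hcx)].
 assert (hc' : 0 < Rabs c) by (apply Rabs_pos_lt; auto).
 assert (Hs : sup_norm x <= / Rabs c * sup_norm (fun k => c * x k)).
 { apply sup_le. apply Rmult_le_pos. left; apply Rinv_0_lt_compat; auto. eapply Rle_trans; [apply Rabs_pos|apply (sup_ge _ _ 0%nat Hcx)].
   intros k. replace (Rabs (x k)) with (/ Rabs c * Rabs (c * x k)). apply Rmult_le_compat_l. left; apply Rinv_0_lt_compat; auto.
   apply (sup_ge _ _ k Hcx). rewrite Rabs_mult. field. lra. }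
 apply (Rmult_le_compat_l (Rabs c)) in Hs. rewrite <- Rmult_assoc, Rinv_r, Rmult_1_l in Hs; lra. lra. Qed.

Lemma rn_homog a u : read_data a u -> forall x B c, (forall k, Rabs (x k) <= B) ->
  read_norm a u (fun k => c * x k) = Rabs c * read_norm a u x.
Proof. intros H x B c Hx. rewrite !rn_unfold. rewrite (sup_homog x B c Hx).
 rewrite (Series_ext _ (fun n => Rabs c * nt a u x n)). rewrite Series_scal_l. ring.
 intros n. unfold nt. rewrite (rp_ext a u _ (fun k => c * x k + 0 * x k)) by (intros; ring).
 rewrite (rp_lin a u x x c 0 n). rewrite Rmult_0_l, Rplus_0_r, Rabs_mult. ring. Qed.

Lemma rn_zero a u : read_data a u -> forall x, (forall k, x k = 0) -> read_norm a u x = 0.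
Proof. intros H x Hx. assert (Hb : forall k, Rabs (x k) <= 0) by (intros k; rewrite Hx, Rabs_R0; lra).
 destruct (rn_bounds a u H x 0 Hb) as (h1&h2&h3&h4). lra. Qed.

Lemma c0_lin x y al be : c0 x -> c0 y -> c0 (fun k => al * x k + be * y k).
Proof. intros Hx Hy. unfold c0 in *.
 assert (H := is_lim_seq_plus' _ _ _ _ (is_lim_seq_scal_l _ al _ Hx) (is_lim_seq_scal_l _ be _ Hy)).
 simpl in H. replace (al * 0 + be * 0) with 0 in H by ring. exact H. Qed.

Lemma c0_zero : c0 (fun _ => 0).
Proof. apply is_lim_seq_const. Qed.

Lemma c0_ev0 x N : (forall k, (N <= k)%nat -> x k = 0) -> c0 x.
Proof. intros H. apply is_lim_seq_spec. intros eps. exists N. intros n hn. rewrite H; auto.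
 rewrite Rminus_0_r, Rabs_R0. apply cond_pos. Qed.

Lemma c0_ext x y : c0 x -> (forall k, y k = x k) -> c0 y.
Proof. intros H E. replace y with x; auto. apply functional_extensionality; intros; auto. Qed.

Lemma dual_lin' a u f x y al be g : dual_elt a u f -> c0 x -> c0 y -> (forall k, g k = al * x k + be * y k) ->
  f g = al * f x + be * f y.
Proof. intros [Hl _] Hx Hy E. replace g with (fun k => al * x k + be * y k). apply Hl; auto.
 apply functional_extensionality; intros; auto. Qed.

Lemma dual_pt0 a u f z : dual_elt a u f -> (forall k, z k = 0) -> f z = 0.
Proof. intros Hf Hz. rewrite (dual_lin' a u f (fun _ => 0) (fun _ => 0) 0 0 z Hf c0_zero c0_zero). ring.
 intros k; rewrite Hz; ring. Qed.

Lemma dual_bound a u : read_data a u -> forall f, dual_elt a u f -> exists C, 0 <= C /\ forall x, c0 x -> Rabs (f x) <= C * read_norm a u x.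
Proof. intros H f [_ [C HC]]. exists (Rabs C). split. apply Rabs_pos. intros x Hx.
 destruct (c0_bounded x Hx) as [B HB]. destruct (rn_bounds a u H x B HB) as (h1&h2&h3&h4).
 eapply Rle_trans. apply HC; auto. apply Rmult_le_compat_r. lra. apply Rle_abs. Qed.

Lemma dual_norm_ge a u : read_data a u -> forall f x, dual_elt a u f -> c0 x -> read_norm a u x <= 1 -> Rabs (f x) <= dual_norm a u f.
Proof. intros H f x Hf Hx Hn. destruct (dual_bound a u H f Hf) as [C [C0 HC]].
 unfold dual_norm. apply (lub_ge _ C). intros r (y & hy & hn & ->).
 eapply Rle_trans. apply HC; auto. rewrite <- (Rmult_1_r C) at 2. apply Rmult_le_compat_l; auto.
 exists x; auto. Qed.

Lemma dual_norm_nonneg a u : read_data a u -> forall f, dual_elt a u f -> 0 <= dual_norm a u f.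
Proof. intros H f Hf. eapply Rle_trans. apply Rabs_pos. apply (dual_norm_ge a u H f (fun _ => 0) Hf c0_zero).
 rewrite (rn_zero a u H); auto; lra. Qed.

Lemma dual_norm_le a u f M : 0 <= M -> (forall x, c0 x -> read_norm a u x <= 1 -> Rabs (f x) <= M) -> dual_norm a u f <= M.
Proof. intros H0 H. unfold dual_norm. apply lub_le0; auto. intros r (y & hy & hn & ->). auto. Qed.

Lemma dual_norm_app a u : read_data a u -> forall f z, dual_elt a u f -> c0 z -> Rabs (f z) <= dual_norm a u f * read_norm a u z.
Proof. intros H f z Hf Hz. destruct (c0_bounded z Hz) as [B HB]. destruct (rn_bounds a u H z B HB) as (h1&h2&h3&h4).
 destruct (Req_dec (read_norm a u z) 0) as [E|E].
 - rewrite (dual_pt0 a u f z Hf). rewrite Rabs_R0. rewrite E; lra.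
   intros k. assert (h := rn_ge_coord a u H z B k HB). rewrite E in h. apply Rabs_eq_0. assert (0 <= Rabs (z k)) by apply Rabs_pos. lra.
 - set (N := read_norm a u z) in *. assert (Np : 0 < N) by lra.
   set (z' := fun k => / N * z k + 0 * z k).
   assert (Hz' : c0 z') by (apply c0_lin; auto).
   assert (Hn' : read_norm a u z' = 1).
   { unfold z'.
     replace (fun k => / N * z k + 0 * z k) with (fun k => / N * z k). rewrite (rn_homog a u H z B (/ N) HB).
     fold N. rewrite Rabs_right. field; lra. left; apply Rinv_0_lt_compat; auto.
     apply functional_extensionality; intros; ring. }
   assert (Hf' : f z' = / N * f z + 0 * f z) by (apply (dual_lin' a u f z z); auto).
   assert (h := dual_norm_ge a u H f z' Hf Hz' ltac:(lra)). rewrite Hf' in h.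
   replace (/ N * f z + 0 * f z) with (/ N * f z) in h by ring. rewrite Rabs_mult, Rabs_right in h.
   apply (Rmult_le_compat_l N) in h; [|lra]. rewrite <- Rmult_assoc, Rinv_r, Rmult_1_l in h; lra.
   left; apply Rinv_0_lt_compat; auto. Qed.

Lemma dual_comb a u : read_data a u -> forall f g al be, dual_elt a u f -> dual_elt a u g -> dual_elt a u (fun z => al * f z + be * g z).
Proof. intros H f g al be Hf Hg. split.
 - intros x y p q Hx Hy. rewrite (dual_lin' a u f x y p q) by auto. rewrite (dual_lin' a u g x y p q) by auto. ring.
 - destruct (dual_bound a u H f Hf) as [C1 [C10 H1]]. destruct (dual_bound a u H g Hg) as [C2 [C20 H2]].
   exists (Rabs al * C1 + Rabs be * C2). intros x Hx. eapply Rle_trans. apply Rabs_triang. rewrite !Rabs_mult.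
   specialize (H1 x Hx). specialize (H2 x Hx).
   assert (Rabs al * Rabs (f x) <= Rabs al * (C1 * read_norm a u x)) by (apply Rmult_le_compat_l; auto; apply Rabs_pos).
   assert (Rabs be * Rabs (g x) <= Rabs be * (C2 * read_norm a u x)) by (apply Rmult_le_compat_l; auto; apply Rabs_pos).
   lra. Qed.

Lemma dual_ext a u f g : dual_elt a u f -> (forall z, g z = f z) -> dual_elt a u g.
Proof. intros Hf E. replace g with f; auto. apply functional_extensionality; intros; auto. Qed.

Lemma dual_zero_fun a u : dual_elt a u (fun _ => 0).
Proof. split. intros; ring. exists 0. intros x _. rewrite Rabs_R0; lra. Qed.

Lemma dual_ek a u : read_data a u -> forall k, dual_elt a u (fun z => z k).
Proof. intros H k. split. intros; reflexivity. exists 1. intros x Hx. destruct (c0_bounded x Hx) as [B HB].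
 rewrite Rmult_1_l. apply (rn_ge_coord a u H x B k HB). Qed.

Lemma dual_fsum a u : read_data a u -> forall (F : nat -> (nat -> R) -> R) c M, (forall k, dual_elt a u (F k)) ->
  dual_elt a u (fun z => fsum (fun k => c k * F k z) M).
Proof. intros H F c M HF. induction M; simpl. apply dual_zero_fun.
 apply (dual_ext a u (fun z => 1 * fsum (fun k => c k * F k z) M + c M * F M z)). apply dual_comb; auto.
 intros; ring. Qed.

Lemma bid_lin' a u P f g al be h : bidual_elt a u P -> dual_elt a u f -> dual_elt a u g ->
  (forall z, h z = al * f z + be * g z) -> P h = al * P f + be * P g.
Proof. intros [Hl _] Hf Hg E. replace h with (fun z => al * f z + be * g z). apply Hl; auto.
 apply functional_extensionality; intros; auto. Qed.

Lemma bid_zero a u P : bidual_elt a u P -> P (fun _ => 0) = 0.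
Proof. intros HP. rewrite (bid_lin' a u P (fun _ => 0) (fun _ => 0) 0 0 (fun _ => 0) HP (dual_zero_fun a u) (dual_zero_fun a u)). ring.
 intros; ring. Qed.

Lemma bid_fsum a u : read_data a u -> forall P (F : nat -> (nat -> R) -> R) c M, bidual_elt a u P -> (forall k, dual_elt a u (F k)) ->
  P (fun z => fsum (fun k => c k * F k z) M) = fsum (fun k => c k * P (F k)) M.
Proof. intros H P F c M HP HF. induction M; simpl. apply (bid_zero a u P HP).
 rewrite (bid_lin' a u P (fun z => fsum (fun k => c k * F k z) M) (F M) 1 (c M)); auto.
 rewrite IHM; ring. apply dual_fsum; auto. intros; ring. Qed.

Lemma dual_gfun a u : read_data a u -> forall n, dual_elt a u (fun z => read_pair a u z n).
Proof. intros H n. apply (dual_ext a u (fun z => 1 * fsum (fun k => Q2R (u n k) * (fun z => z k) z) (a n) + (-1) * (fun z => z (a n)) z)).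
 apply dual_comb; auto. apply (dual_fsum a u H (fun k z => z k)). intros; apply dual_ek; auto. apply dual_ek; auto.
 intros z. unfold read_pair. rewrite (fsum_ext (fun k => z k * Q2R (u n k)) (fun k => Q2R (u n k) * z k)). ring. intros; ring. Qed.

Lemma bid_gfun a u : read_data a u -> forall P n, bidual_elt a u P ->
  P (fun z => read_pair a u z n) = read_pair a u (fun k => P (fun z => z k)) n.
Proof. intros H P n HP.
 rewrite (bid_lin' a u P (fun z => fsum (fun k => Q2R (u n k) * (fun z => z k) z) (a n)) (fun z => z (a n)) 1 (-1)); auto.
 rewrite (bid_fsum a u H P (fun k z => z k)); auto. unfold read_pair. rewrite (fsum_ext (fun k => P (fun z => z k) * Q2R (u n k)) (fun k => Q2R (u n k) * P (fun z => z k))).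
 ring. intros; ring. intros; apply dual_ek; auto.
 apply (dual_fsum a u H (fun k z => z k)). intros; apply dual_ek; auto. apply dual_ek; auto.
 intros z. unfold read_pair. rewrite (fsum_ext (fun k => z k * Q2R (u n k)) (fun k => Q2R (u n k) * z k)). ring. intros; ring. Qed.

Lemma bid_bound a u : read_data a u -> forall P f, bidual_elt a u P -> dual_elt a u f -> dual_norm a u f <= 1 ->
  Rabs (P f) <= bidual_norm a u P.
Proof. intros H P f HP Hf Hn. destruct HP as [HPl [C HC]]. unfold bidual_norm. apply (lub_ge _ (Rabs C)).
 intros r (g & hg & hn & ->). eapply Rle_trans. apply HC; auto. assert (0 <= dual_norm a u g) by (apply dual_norm_nonneg; auto).
 assert (C <= Rabs C) by apply Rle_abs. assert (0 <= Rabs C) by apply Rabs_pos. nra.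
 exists f; auto. Qed.

Definition sgn (r : R) : R := if Rle_dec 0 r then 1 else -1.
Lemma sgn_abs r : sgn r * r = Rabs r.
Proof. unfold sgn. destruct (Rle_dec 0 r). rewrite Rabs_right; lra. rewrite Rabs_left; lra. Qed.
Lemma sgn_le r : Rabs (sgn r) <= 1.
Proof. unfold sgn. destruct (Rle_dec 0 r). rewrite Rabs_R1; lra. rewrite Rabs_left; lra. Qed.
Lemma abs_sgn_mul r y : Rabs (sgn r * y) <= Rabs y.
Proof. rewrite Rabs_mult. assert (h := sgn_le r). assert (0 <= Rabs y) by apply Rabs_pos. nra. Qed.

Lemma F1_partial a u : read_data a u -> forall P, bidual_elt a u P -> forall k M,
  Rabs (P (fun z => z k)) + fsum (nt a u (fun j => P (fun z => z j))) M <= bidual_norm a u P.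
Proof. intros H P HP k M. set (x := fun j => P (fun z => z j)).
 set (s := sgn (x k)). set (c := fun n => wt a n * sgn (read_pair a u x n)).
 set (F := fun z : nat -> R => s * z k + 1 * fsum (fun n => c n * (fun z => read_pair a u z n) z) M).
 assert (HG : forall n, dual_elt a u (fun z => read_pair a u z n)) by (intros; apply dual_gfun; auto).
 assert (HF : dual_elt a u F). { apply dual_comb; auto. apply dual_ek; auto. apply dual_fsum; auto. }
 assert (HFn : dual_norm a u F <= 1).
 { apply dual_norm_le. lra. intros z Hz Hn. destruct (c0_bounded z Hz) as [B HB].
   destruct (nser_ex a u H z B HB) as [E1 E2].
   assert (h1 := ser_ge_partial _ M (nt_nonneg a u z) E1).
   assert (h2 : Rabs (fsum (fun n => c n * read_pair a u z n) M) <= fsum (nt a u z) M).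
   { eapply Rle_trans. apply fsum_abs. apply fsum_le. intros n _. unfold c, nt. rewrite Rmult_assoc, Rabs_mult, (Rabs_right (wt a n)).
     apply Rmult_le_compat_l. left; apply (wt_pos a n). apply abs_sgn_mul. left; apply (wt_pos a n). }
   assert (h3 := abs_sgn_mul (x k) (z k)). assert (h4 := sup_ge z B k HB).
   unfold F. eapply Rle_trans. apply Rabs_triang. rewrite Rmult_1_l. fold s in h3.
   rewrite rn_unfold in Hn. lra. }
 assert (h := bid_bound a u H P F HP HF HFn).
 assert (E : P F = s * x k + 1 * fsum (fun n => c n * P (fun z => read_pair a u z n)) M).
 { unfold F. rewrite (bid_lin' a u P (fun z => z k) (fun z => fsum (fun n => c n * (fun z => read_pair a u z n) z) M) s 1); auto.
   rewrite (bid_fsum a u H P (fun n z => read_pair a u z n)); auto. apply dual_ek; auto. apply dual_fsum; auto. }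
 rewrite E in h. rewrite (fsum_ext _ (nt a u x)) in h. unfold s in h. rewrite sgn_abs in h.
 assert (0 <= fsum (nt a u x) M) by (apply fsum_nonneg; apply nt_nonneg).
 rewrite Rmult_1_l, Rabs_right in h. exact h. assert (0 <= Rabs (x k)) by apply Rabs_pos. lra.
 intros n _. rewrite (bid_gfun a u H P n HP). fold x. unfold c, nt, wt. rewrite Rmult_assoc, sgn_abs. reflexivity. Qed.

Lemma F1_partial' a u : read_data a u -> forall P, bidual_elt a u P -> forall x, x = (fun j => P (fun z => z j)) -> forall k M,
  Rabs (x k) + fsum (nt a u x) M <= bidual_norm a u P.
Proof. intros H P HP x Ex k M. subst x. apply F1_partial; auto. Qed.

Lemma F1 a u : read_data a u -> forall P, bidual_elt a u P ->
  (forall k, Rabs (P (fun z => z k)) <= bidual_norm a u P) /\ read_norm a u (fun j => P (fun z => z j)) <= bidual_norm a u P.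
Proof. intros H P HP. remember (fun j => P (fun z => z j)) as x eqn:Ex.
 assert (Hx : forall k, P (fun z => z k) = x k) by (intros; subst; reflexivity).
 set (b := bidual_norm a u P). assert (HF := F1_partial' a u H P HP x Ex). fold b in HF.
 assert (Hk : forall k, Rabs (x k) <= b). { intros k. specialize (HF k 0%nat). cbn [fsum] in HF. lra. }
 split. intros k; rewrite Hx; auto.
 assert (Hb : forall M, fsum (nt a u x) M <= b - sup_norm x).
 { intros M. assert (h : sup_norm x <= b - fsum (nt a u x) M).
   { apply sup_le. assert (h := HF 0%nat M). assert (0 <= Rabs (x 0%nat)) by apply Rabs_pos. lra.
     intros k. assert (h := HF k M). lra. }
   lra. }
 destruct (ser_bounded _ _ (nt_nonneg a u x) Hb) as [_ h]. rewrite rn_unfold. lra. Qed.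

Definition ev (k : nat) : nat -> R := fun j => if Nat.eqb j k then 1 else 0.
Definition trunc (K : nat) (z : nat -> R) : nat -> R := fun j => if Nat.ltb j K then z j else 0.
Definition tl (K : nat) (z : nat -> R) : nat -> R := fun j => if Nat.ltb j K then 0 else z j.

Lemma c0_trunc K z : c0 (trunc K z).
Proof. apply (c0_ev0 _ K). intros k hk. unfold trunc. destruct (Nat.ltb_spec k K); auto; lia. Qed.
Lemma c0_evk k : c0 (ev k).
Proof. apply (c0_ev0 _ (S k)). intros j hj. unfold ev. destruct (Nat.eqb_spec j k); auto; lia. Qed.
Lemma c0_tl K z : c0 z -> c0 (tl K z).
Proof. intros Hz. apply (c0_ext (fun j => 1 * z j + (-1) * trunc K z j)). apply c0_lin; auto; apply c0_trunc.
 intros j. unfold tl, trunc. destruct (Nat.ltb_spec j K); ring. Qed.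

Lemma le_eps r s : (forall d, 0 < d -> r <= s + d) -> r <= s.
Proof. intros H. destruct (Rle_dec r s); auto. exfalso. specialize (H ((r - s)/2) ltac:(lra)). lra. Qed.

Lemma f_trunc a u f z K : dual_elt a u f -> f (trunc K z) = fsum (fun k => z k * f (ev k)) K.
Proof. intros Hf. induction K; simpl. apply (dual_pt0 a u f); auto.
 rewrite (dual_lin' a u f (trunc K z) (ev K) 1 (z K)); auto. rewrite IHK; ring. apply c0_trunc. apply c0_evk.
 intros j. unfold trunc, ev. destruct (Nat.ltb_spec j K); destruct (Nat.ltb_spec j (S K)); destruct (Nat.eqb_spec j K);
 try (exfalso; lia); subst; ring. Qed.

Lemma ell1 a u : read_data a u -> forall f, dual_elt a u f -> exists C, 0 <= C /\ (forall x, c0 x -> Rabs (f x) <= C * read_norm a u x) /\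
  forall L, fsum (fun k => Rabs (f (ev k))) L <= 9 * C.
Proof. intros H f Hf. destruct (dual_bound a u H f Hf) as [C [C0 HC]]. exists C. repeat split; auto. intros L.
 set (s := trunc L (fun j => sgn (f (ev j)))).
 assert (Hs : forall j, Rabs (s j) <= 1). { intros j. unfold s, trunc. destruct (Nat.ltb j L). apply sgn_le. rewrite Rabs_R0; lra. }
 destruct (rn_bounds a u H s 1 Hs) as (h1&h2&h3&h4).
 assert (E : f s = fsum (fun k => Rabs (f (ev k))) L). { unfold s. rewrite (f_trunc a u); auto. apply fsum_ext. intros; apply sgn_abs. }
 assert (h := HC s (c0_trunc _ _)). rewrite E in h. rewrite Rabs_right in h. nra.
 apply Rle_ge, fsum_nonneg. intros; apply Rabs_pos. Qed.

Lemma fsum_tl g K L : fsum (fun k => if Nat.ltb k K then 0 else g k) L + fsum g (Nat.min K L) = fsum g L.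
Proof. induction L; simpl. rewrite Nat.min_0_r; simpl; ring.
 destruct (Nat.ltb_spec L K).
 - rewrite (Nat.min_r K (S L)) by lia. rewrite (Nat.min_r K L) in IHL by lia. simpl. lra.
 - rewrite (Nat.min_l K (S L)) by lia. rewrite (Nat.min_l K L) in IHL by lia. lra. Qed.

Lemma ser_tail a : (forall n, 0 <= a n) -> ex_series a -> forall eps, 0 < eps -> exists K0, forall K, (K0 <= K)%nat -> Series a - fsum a K < eps.
Proof. intros Ha He eps Heps. assert (Hs := Series_correct _ He).
 assert (Hl : is_lim_seq (sum_n a) (Series a)) by exact Hs. apply is_lim_seq_spec in Hl.
 destruct (Hl (mkposreal eps Heps)) as [N HN]. simpl in HN. exists (S N). intros K HK. destruct K. lia.
 rewrite fsum_sum_n. specialize (HN K ltac:(lia)). apply Rabs_def2 in HN. lra. Qed.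

Lemma tail_small a u : read_data a u -> forall f, dual_elt a u f -> forall eps, 0 < eps -> exists K0, forall K, (K0 <= K)%nat ->
  forall z, c0 z -> (forall j, Rabs (z j) <= 1) -> Rabs (f (tl K z)) <= eps.
Proof. intros H f Hf eps Heps. destruct (ell1 a u H f Hf) as [C [C0 [HC Hl1]]].
 set (g := fun k => Rabs (f (ev k))). assert (Hg0 : forall k, 0 <= g k) by (intros; apply Rabs_pos).
 destruct (ser_bounded g (9 * C) Hg0 Hl1) as [Hex _].
 destruct (ser_tail g Hg0 Hex eps Heps) as [K0 HK0]. exists K0. intros K HK z Hz Hz1.
 apply (le_eps _ eps). intros d Hd.
 set (e' := d / (9 * C + 1)).
 assert (He' : 0 < e') by (unfold e'; apply Rdiv_lt_0_compat; lra).
 assert (Hzl := Hz). apply is_lim_seq_spec in Hzl. destruct (Hzl (mkposreal e' He')) as [L1 HL1]. simpl in HL1.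
 set (L := Nat.max K L1).
 assert (Ed : f (tl K z) = 1 * f (trunc L (tl K z)) + 1 * f (tl L z)).
 { apply (dual_lin' a u f); auto. apply c0_trunc. apply c0_tl; auto.
   intros j. unfold trunc, tl, L. destruct (Nat.ltb_spec j K); destruct (Nat.ltb_spec j (Nat.max K L1)); try (exfalso; lia); ring. }
 assert (h1 : Rabs (f (trunc L (tl K z))) <= eps).
 { rewrite (f_trunc a u); auto. eapply Rle_trans. apply fsum_abs.
   eapply Rle_trans. apply (fsum_le _ (fun k => if Nat.ltb k K then 0 else g k)).
   { intros k _. unfold tl. destruct (Nat.ltb k K). rewrite Rmult_0_l, Rabs_R0; lra. rewrite Rabs_mult.
     unfold g. assert (h := Hz1 k). assert (0 <= Rabs (f (ev k))) by apply Rabs_pos. nra. }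
   assert (h := fsum_tl g K L). rewrite Nat.min_l in h by (unfold L; lia).
   assert (h2 := ser_ge_partial g L Hg0 Hex). assert (h3 := HK0 K HK). lra. }
 assert (h2 : Rabs (f (tl L z)) <= d).
 { assert (Hb : forall j, Rabs (tl L z j) <= e').
   { intros j. unfold tl. destruct (Nat.ltb_spec j L). rewrite Rabs_R0; lra. specialize (HL1 j ltac:(unfold L in *; lia)).
     rewrite Rminus_0_r in HL1. lra. }
   destruct (rn_bounds a u H _ e' Hb) as (h1'&h2'&h3'&h4').
   eapply Rle_trans. apply HC. apply c0_tl; auto.
   assert (C * read_norm a u (tl L z) <= C * (9 * e')) by (apply Rmult_le_compat_l; auto).
   assert (C * (9 * e') <= d). { unfold e'. apply (Rmult_le_reg_r (9 * C + 1)). lra. field_simplify; nra. }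
   lra. }
 rewrite Ed. eapply Rle_trans. apply Rabs_triang. rewrite !Rmult_1_l. lra. Qed.

Lemma bid_bound' a u : read_data a u -> forall P, bidual_elt a u P -> exists C, 0 <= C /\ forall g, dual_elt a u g -> Rabs (P g) <= C * dual_norm a u g.
Proof. intros H P [_ [C HC]]. exists (Rabs C). split. apply Rabs_pos. intros g Hg. eapply Rle_trans. apply HC; auto.
 apply Rmult_le_compat_r. apply dual_norm_nonneg; auto. apply Rle_abs. Qed.

Lemma REP a u : read_data a u -> forall P f, bidual_elt a u P -> dual_elt a u f -> forall eps, 0 < eps ->
  exists K0, forall K, (K0 <= K)%nat -> Rabs (P f - f (trunc K (fun k => P (fun z => z k)))) <= eps.
Proof. intros H P f HP Hf eps Heps. destruct (bid_bound' a u H P HP) as [C [C0 HC]].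
 set (e := eps / (C + 1)). assert (He : 0 < e) by (unfold e; apply Rdiv_lt_0_compat; lra).
 destruct (tail_small a u H f Hf e He) as [K0 HK0]. exists K0. intros K HK.
 set (FK := fun z : nat -> R => fsum (fun k => f (ev k) * (fun z => z k) z) K).
 assert (HFK : dual_elt a u FK) by (apply dual_fsum; auto; intros; apply dual_ek; auto).
 assert (Hd : dual_elt a u (fun z => 1 * f z + (-1) * FK z)) by (apply dual_comb; auto).
 assert (Hn : dual_norm a u (fun z => 1 * f z + (-1) * FK z) <= e).
 { apply dual_norm_le. lra. intros z Hz Hnz. destruct (c0_bounded z Hz) as [B HB].
   assert (Hz1 : forall j, Rabs (z j) <= 1) by (intros j; assert (h := rn_ge_coord a u H z B j HB); lra).
   assert (E : f z = 1 * f (trunc K z) + 1 * f (tl K z)).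
   { apply (dual_lin' a u f); auto. apply c0_trunc. apply c0_tl; auto. intros j; unfold trunc, tl; destruct (Nat.ltb j K); ring. }
   rewrite E. rewrite (f_trunc a u f z K Hf). unfold FK.
   rewrite (fsum_ext (fun k => f (ev k) * (fun z0 : nat -> R => z0 k) z) (fun k => z k * f (ev k))) by (intros; simpl; ring).
   replace (1 * (1 * fsum (fun k => z k * f (ev k)) K + 1 * f (tl K z)) + -1 * fsum (fun k => z k * f (ev k)) K) with (f (tl K z)) by ring.
   apply HK0; auto. }
 assert (E1 : P (fun z => 1 * f z + (-1) * FK z) = 1 * P f + (-1) * P FK) by (apply (bid_lin' a u P); auto).
 assert (E2 : P FK = f (trunc K (fun k => P (fun z => z k)))).
 { unfold FK. rewrite (bid_fsum a u H P (fun k z => z k)); auto. rewrite (f_trunc a u); auto. apply fsum_ext; intros; ring.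
   intros; apply dual_ek; auto. }
 assert (h := HC _ Hd). rewrite E1, E2 in h.
 replace (1 * P f + -1 * f (trunc K (fun k => P (fun z => z k)))) with (P f - f (trunc K (fun k => P (fun z => z k)))) in h by ring.
 eapply Rle_trans. apply h. assert (0 <= dual_norm a u (fun z => 1 * f z + (-1) * FK z)) by (apply dual_norm_nonneg; auto).
 assert (C * dual_norm a u (fun z => 1 * f z + (-1) * FK z) <= C * e) by (apply Rmult_le_compat_l; auto).
 assert (C * e <= eps). { unfold e. apply (Rmult_le_reg_r (C + 1)). lra. field_simplify; nra. }
 lra. Qed.

Lemma rp_zero a u z n : (forall k, (k <= a n)%nat -> z k = 0) -> read_pair a u z n = 0.
Proof. intros Hz. rewrite (rp_ext a u z (fun k => 0 * z k + 0 * z k)). rewrite rp_lin. ring.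
 intros k hk. rewrite Hz; auto; ring. Qed.

Lemma trunc_norm a u : read_data a u -> forall x B K, (forall k, Rabs (x k) <= B) ->
  read_norm a u (trunc K x) <= read_norm a u x + 8 * B * (/2)^K.
Proof. intros H x B K Hx. assert (HB : 0 <= B) by (eapply Rle_trans; [apply Rabs_pos|apply (Hx 0%nat)]).
 destruct (rn_bounds a u H x B Hx) as (h1&h2&h3&h4).
 assert (Htr : forall k, Rabs (trunc K x k) <= sup_norm x).
 { intros k. unfold trunc. destruct (Nat.ltb k K). apply (sup_ge x B k Hx). rewrite Rabs_R0; auto. }
 assert (Hs := sup_le _ _ h1 Htr).
 set (t := fun n => wt a n * Rabs (read_pair a u (tl K x) n)).
 assert (Ht0 : forall n, 0 <= t n) by (intros n; unfold t; apply Rmult_le_pos; [left; apply wt_pos|apply Rabs_pos]).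
 destruct (tail_ser a u H K B t HB Ht0) as [Te Ts].
 { intros n. unfold t. apply Rmult_le_compat_l. left; apply wt_pos. apply rp_bound; auto.
   intros k _. unfold tl. destruct (Nat.ltb k K). rewrite Rabs_R0; auto. apply Hx. }
 { intros n hn. unfold t. rewrite rp_zero. rewrite Rabs_R0; ring. intros k hk. unfold tl. destruct (Nat.ltb_spec k K); auto; lia. }
 destruct (nser_ex a u H x B Hx) as [Xe _].
 assert (Hle : Series (nt a u (trunc K x)) <= Series (fun n => nt a u x n + t n)).
 { apply Series_le. intros n. split. apply nt_nonneg. unfold nt, t, wt.
   rewrite (rp_ext a u (trunc K x) (fun k => 1 * x k + (-1) * tl K x k)). rewrite rp_lin.
   assert (0 < / 2 ^ (a n * a n)) by apply (wt_pos a n).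
   assert (Rabs (1 * read_pair a u x n + -1 * read_pair a u (tl K x) n) <= Rabs (read_pair a u x n) + Rabs (read_pair a u (tl K x) n)).
   { eapply Rle_trans. apply Rabs_triang. rewrite !Rabs_mult. replace (Rabs (-1)) with 1 by (rewrite Rabs_left; lra). rewrite Rabs_R1. lra. }
   nra. intros k _. unfold trunc, tl. destruct (Nat.ltb k K); ring.
   exact (ex_series_plus _ _ Xe Te). }
 rewrite Series_plus in Hle; auto. rewrite !rn_unfold. lra. Qed.

Lemma F2 a u : read_data a u -> forall P f B, bidual_elt a u P -> dual_elt a u f -> dual_norm a u f <= 1 ->
  (forall k, Rabs (P (fun z => z k)) <= B) -> Rabs (P f) <= read_norm a u (fun k => P (fun z => z k)).
Proof. intros H P f B HP Hf Hn HB. set (x := fun k => P (fun z => z k)).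
 assert (HB0 : 0 <= B) by (eapply Rle_trans; [apply Rabs_pos|apply (HB 0%nat)]).
 apply le_eps. intros d Hd.
 destruct (REP a u H P f HP Hf (d/2) ltac:(lra)) as [K0 HK0].
 assert (Hg : Rabs (/2) < 1) by (rewrite Rabs_right; lra).
 destruct (pow_lt_1_zero (/2) Hg (d / (2 * (8 * B + 1)))) as [K1 HK1].
 { apply Rdiv_lt_0_compat; lra. }
 set (K := Nat.max K0 K1). specialize (HK0 K ltac:(unfold K; lia)). specialize (HK1 K ltac:(unfold K; lia)).
 fold x in HK0. rewrite Rabs_right in HK1 by (left; apply pow_half_pos).
 assert (Ht := trunc_norm a u H x B K HB).
 assert (Hfn := dual_norm_app a u H f (trunc K x) Hf (c0_trunc K x)).
 assert (Hnn := dual_norm_nonneg a u H f Hf).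
 destruct (rn_bounds a u H (trunc K x) B) as (g1&g2&g3&g4).
 { intros k. unfold trunc. destruct (Nat.ltb k K). apply HB. rewrite Rabs_R0; auto. }
 assert (Rabs (f (trunc K x)) <= read_norm a u (trunc K x)).
 { eapply Rle_trans. apply Hfn. rewrite <- (Rmult_1_l (read_norm a u (trunc K x))) at 2. apply Rmult_le_compat_r; lra. }
 assert (8 * B * (/2)^K <= d/2).
 { assert (8 * B * (/2)^K <= 8 * B * (d / (2 * (8 * B + 1)))) by (apply Rmult_le_compat_l; lra).
   assert (8 * B * (d / (2 * (8 * B + 1))) <= d / 2). { apply (Rmult_le_reg_r (2 * (8 * B + 1))). lra. field_simplify; nra. }
   lra. }
 assert (Rabs (P f) <= Rabs (P f - f (trunc K x)) + Rabs (f (trunc K x))).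
 { replace (P f) with ((P f - f (trunc K x)) + f (trunc K x)) at 1 by ring. apply Rabs_triang. }
 lra. Qed.

Lemma Qapprox r : exists q : Q, Rabs (Q2R q - r) <= / 2.
Proof. exists (Qmake (up (2 * r)) 2). unfold Q2R. simpl. destruct (archimed (2 * r)) as [h1 h2].
 rewrite Rabs_right; lra. Qed.

Lemma abs_add_eq p q : Rabs (p + q) = Rabs p + Rabs q -> 0 <= p * q.
Proof. intros E. destruct (Rle_dec 0 p); destruct (Rle_dec 0 q); try nra.
 - rewrite (Rabs_right p), (Rabs_left q) in E by nra. destruct (Rle_dec 0 (p + q)).
   rewrite Rabs_right in E; nra. rewrite Rabs_left in E; nra.
 - rewrite (Rabs_left p), (Rabs_right q) in E by lra. destruct (Rle_dec 0 (p + q)).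
   rewrite Rabs_right in E; nra. rewrite Rabs_left in E; nra. Qed.

Lemma abs_le r c : Rabs r <= c -> - c <= r <= c.
Proof. unfold Rabs. destruct (Rcase_abs r); lra. Qed.

Lemma density a u : read_data a u -> forall x y, (forall k, Rabs (x k) <= 1) -> (forall k, Rabs (y k) <= 1) ->
  (forall n, 0 <= read_pair a u x n * read_pair a u y n) -> forall i j, x i * y j = x j * y i.
Proof. intros H x y Hx Hy Hs i j. destruct (Req_dec (x i * y j - x j * y i) 0) as [E|E]; [lra|exfalso].
 set (D := x i * y j - x j * y i) in *.
 assert (Hij : i <> j) by (intros ->; apply E; unfold D; ring).
 set (t0 := 3 * (y j + x j) / D). set (s0 := - 3 * (x i + y i) / D).
 assert (Et1 : t0 * x i + s0 * x j = 3) by (unfold t0, s0, D in *; field; auto).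
 assert (Et2 : t0 * y i + s0 * y j = - 3) by (unfold t0, s0, D in *; field; auto).
 destruct (Qapprox t0) as [tq Htq]. destruct (Qapprox s0) as [sq Hsq].
 set (v := fun k => if Nat.eqb k i then tq else if Nat.eqb k j then sq else 0%Q).
 assert (Hv : c00Q v). { exists (S (Nat.max i j)). intros k hk. unfold v. destruct (Nat.eqb_spec k i); [lia|]. destruct (Nat.eqb_spec k j); [lia|]. reflexivity. }
 destruct H as (Hu & Ha0 & Hinc & Hsupp & Hl). assert (Hd : read_data a u) by (repeat split; auto).
 destruct (Hu v Hv (S (Nat.max i j))) as [n [Hn Hun]].
 assert (Han := a_ge a u Hd n).
 set (T := Q2R tq). set (S := Q2R sq).
 assert (Hrp : forall z, read_pair a u z n = z i * T + z j * S - z (a n)).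
 { intros z. unfold read_pair. f_equal.
   rewrite (fsum_ext _ (fun k => (if Nat.eqb k i then z i * T else 0) + (if Nat.eqb k j then z j * S else 0))).
   rewrite fsum_plus, !fsum_delta. destruct (Nat.ltb_spec i (a n)); [|lia]. destruct (Nat.ltb_spec j (a n)); [|lia]. ring.
   intros k _. rewrite (Qeq_eqR _ _ (Hun k)). unfold v. destruct (Nat.eqb_spec k i); destruct (Nat.eqb_spec k j); subst; try lia.
   fold T; ring. fold S; ring. rewrite RMicromega.Q2R_0. ring. }
 assert (B1 : Rabs (x i * T + x j * S - 3) <= 1).
 { rewrite <- Et1. replace (x i * T + x j * S - (t0 * x i + s0 * x j)) with (x i * (T - t0) + x j * (S - s0)) by ring.
   eapply Rle_trans. apply Rabs_triang. rewrite !Rabs_mult. assert (h1 := Hx i). assert (h2 := Hx j).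
   assert (0 <= Rabs (T - t0)) by apply Rabs_pos. assert (0 <= Rabs (S - s0)) by apply Rabs_pos. unfold T, S in *. nra. }
 assert (B2 : Rabs (y i * T + y j * S + 3) <= 1).
 { replace 3 with (- (t0 * y i + s0 * y j)) by lra. replace (y i * T + y j * S + - (t0 * y i + s0 * y j)) with (y i * (T - t0) + y j * (S - s0)) by ring.
   eapply Rle_trans. apply Rabs_triang. rewrite !Rabs_mult. assert (h1 := Hy i). assert (h2 := Hy j).
   assert (0 <= Rabs (T - t0)) by apply Rabs_pos. assert (0 <= Rabs (S - s0)) by apply Rabs_pos. unfold T, S in *. nra. }
 specialize (Hs n). rewrite !Hrp in Hs. apply abs_le in B1. apply abs_le in B2.
 assert (h1 := Hx (a n)). assert (h2 := Hy (a n)). apply abs_le in h1. apply abs_le in h2. nra. Qed.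

Lemma bid_sum a u : read_data a u -> forall P P2, bidual_elt a u P -> bidual_elt a u P2 -> bidual_elt a u (fun f => P f + P2 f).
Proof. intros H P P2 HP HP2. split.
 - intros f g al be Hf Hg. destruct HP as [L1 _]. destruct HP2 as [L2 _]. rewrite L1, L2; auto. ring.
 - destruct (bid_bound' a u H P HP) as [C1 [C10 H1]]. destruct (bid_bound' a u H P2 HP2) as [C2 [C20 H2]].
   exists (C1 + C2). intros f Hf. eapply Rle_trans. apply Rabs_triang. specialize (H1 f Hf). specialize (H2 f Hf). lra. Qed.

Lemma main a u : read_data a u ->
  forall P P2 : ((nat -> R) -> R) -> R,
    bidual_elt a u P -> bidual_elt a u P2 ->
    bidual_norm a u P = 1 -> bidual_norm a u P2 = 1 ->
    ~ bidual_eq a u P P2 ->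
    bidual_norm a u (fun f => P f + P2 f) < 2.
Proof. intros H P P2 HP HP2 N1 N2 Hneq.
 destruct (F1 a u H P HP) as [Hx Nx]. destruct (F1 a u H P2 HP2) as [Hy Ny]. rewrite N1 in Hx, Nx. rewrite N2 in Hy, Ny.
 assert (HPQ := bid_sum a u H P P2 HP HP2).
 assert (Hs : forall k, Rabs (P (fun z => z k) + P2 (fun z => z k)) <= 2).
 { intros k. eapply Rle_trans. apply Rabs_triang. specialize (Hx k). specialize (Hy k). lra. }
 assert (Up : bidual_norm a u (fun f => P f + P2 f) <= read_norm a u (fun k => P (fun z => z k) + P2 (fun z => z k))).
 { unfold bidual_norm at 1. apply lub_le0. destruct (rn_bounds a u H _ 2 Hs) as (h1&h2&h3&h4). lra.
   intros r (f & Hf & Hfn & ->). apply (F2 a u H (fun f => P f + P2 f) f 2 HPQ Hf Hfn Hs). }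
 destruct (Rlt_dec (bidual_norm a u (fun f => P f + P2 f)) 2) as [ok|nok]; auto. exfalso.
 remember (fun k => P (fun z => z k)) as x eqn:Ex.
 remember (fun k => P2 (fun z => z k)) as y eqn:Ey.
 assert (Hx' : forall k, Rabs (x k) <= 1) by (intros k; subst x; apply Hx).
 assert (Hy' : forall k, Rabs (y k) <= 1) by (intros k; subst y; apply Hy).
 set (s := fun k => x k + y k).
 assert (Es : (fun k => P (fun z => z k) + P2 (fun z => z k)) = s) by (unfold s; subst; reflexivity).
 rewrite Es in Up. clear Hs.
 assert (Hs : forall k, Rabs (s k) <= 2). { intros k. unfold s. eapply Rle_trans. apply Rabs_triang. specialize (Hx' k). specialize (Hy' k). lra. }
 assert (Ns : 2 <= read_norm a u s) by lra. clear Up nok.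
 assert (Ssup : sup_norm s <= sup_norm x + sup_norm y).
 { destruct (rn_bounds a u H x 1 Hx') as (h1&_). destruct (rn_bounds a u H y 1 Hy') as (h2&_).
   apply sup_le. lra. intros k. unfold s. eapply Rle_trans. apply Rabs_triang.
   assert (h3 := sup_ge x 1 k Hx'). assert (h4 := sup_ge y 1 k Hy'). lra. }
 destruct (nser_ex a u H x 1 Hx') as [Ex1 _]. destruct (nser_ex a u H y 1 Hy') as [Ey1 _]. destruct (nser_ex a u H s 2 Hs) as [Es1 _].
 set (d := fun n => (nt a u x n + nt a u y n) - nt a u s n).
 assert (Ers : forall n, read_pair a u s n = read_pair a u x n + read_pair a u y n).
 { intros n. rewrite (rp_ext a u s (fun k => 1 * x k + 1 * y k)). rewrite rp_lin. ring. intros; unfold s; ring. }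
 assert (Hd0 : forall n, 0 <= d n).
 { intros n. unfold d, nt. rewrite Ers. assert (h := Rabs_triang (read_pair a u x n) (read_pair a u y n)).
   assert (h0 := wt_pos a n). unfold wt in h0. nra. }
 assert (Hdle : forall n, d n <= nt a u x n + nt a u y n) by (intros n; unfold d; assert (h := nt_nonneg a u s n); lra).
 assert (Exy : ex_series (fun n => nt a u x n + nt a u y n)) by exact (ex_series_plus _ _ Ex1 Ey1).
 assert (Ed : ex_series d).
 { apply (ex_series_le d (fun n => nt a u x n + nt a u y n)); auto. intros n. change (norm (d n)) with (Rabs (d n)).
   rewrite Rabs_right. apply Hdle. apply Rle_ge, Hd0. }
 assert (Sd : Series d = Series (nt a u x) + Series (nt a u y) - Series (nt a u s)).
 { unfold d. rewrite Series_minus; auto. rewrite Series_plus; auto. }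
 rewrite !rn_unfold in Nx, Ny, Ns.
 assert (Sd0 : Series d <= 0) by lra.
 assert (Nx1 : read_norm a u x = 1). { rewrite rn_unfold. assert (h := ser_nonneg d Hd0 Ed). lra. }
 assert (Hterm : forall n, d n = 0). { intros n. assert (h := ser_term_le d n Hd0 Ed). specialize (Hd0 n). lra. }
 assert (Hsign : forall n, 0 <= read_pair a u x n * read_pair a u y n).
 { intros n. apply abs_add_eq. specialize (Hterm n). unfold d, nt in Hterm. rewrite Ers in Hterm.
   assert (h0 := wt_pos a n). unfold wt in h0.
   assert (h : / 2 ^ (a n * a n) * (Rabs (read_pair a u x n) + Rabs (read_pair a u y n) - Rabs (read_pair a u x n + read_pair a u y n)) = 0) by lra.
   apply Rmult_integral in h. destruct h as [h|h]; lra. }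
 assert (Hdens := density a u H x y Hx' Hy' Hsign).
 destruct (classic (exists i0, x i0 <> 0)) as [[i0 Hi0]|Hc].
 2:{ rewrite (rn_zero a u H x) in Nx1. lra. intros k. destruct (Req_dec (x k) 0); auto. exfalso; apply Hc; exists k; auto. }
 set (lam := y i0 / x i0).
 assert (Hyl : y = fun k => lam * x k).
 { apply functional_extensionality. intros k. unfold lam. specialize (Hdens i0 k). field_simplify; auto. 
   apply (Rmult_eq_reg_l (x i0)); auto. field_simplify; auto. lra. }
 assert (Nyl : read_norm a u y = Rabs lam * read_norm a u x) by (rewrite Hyl; apply (rn_homog a u H x 1); auto).
 assert (Ny1 : read_norm a u y = 1). { rewrite rn_unfold. assert (h := ser_nonneg d Hd0 Ed). lra. }
 rewrite Nx1, Ny1 in Nyl. 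
 assert (Hlam : lam = 1).
 { destruct (Rle_dec 0 lam). rewrite Rabs_right in Nyl; lra. rewrite Rabs_left in Nyl by lra.
   exfalso. assert (lam = -1) by lra. assert (h : read_norm a u s = 0).
   { apply (rn_zero a u H s). intros k. unfold s. rewrite Hyl. replace lam with (-1) by lra. ring. }
   rewrite rn_unfold in h. lra. }
 assert (Exy' : y = x). { rewrite Hyl, Hlam. apply functional_extensionality; intros; ring. }
 apply Hneq. intros f Hf. apply Rminus_diag_uniq. apply Rabs_eq_0. apply Rle_antisym; [|apply Rabs_pos].
 apply le_eps. intros e He.
 destruct (REP a u H P f HP Hf (e/2) ltac:(lra)) as [K1 HK1].
 destruct (REP a u H P2 f HP2 Hf (e/2) ltac:(lra)) as [K2 HK2].
 specialize (HK1 (Nat.max K1 K2) ltac:(lia)). specialize (HK2 (Nat.max K1 K2) ltac:(lia)).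
 rewrite <- Ex in HK1. rewrite <- Ey, Exy' in HK2.
 replace (P f - P2 f) with ((P f - f (trunc (Nat.max K1 K2) x)) - (P2 f - f (trunc (Nat.max K1 K2) x))) by ring.
 eapply Rle_trans. apply Rabs_triang. rewrite Rabs_Ropp. lra. Qed.

Theorem theorem2p4 (a : nat -> nat) (u : nat -> nat -> Q) :
  read_data a u ->
  forall P P2 : ((nat -> R) -> R) -> R,
    bidual_elt a u P -> bidual_elt a u P2 ->
    bidual_norm a u P = 1 -> bidual_norm a u P2 = 1 ->
    ~ bidual_eq a u P P2 ->
    bidual_norm a u (fun f => P f + P2 f) < 2.
Proof.
  exact (main a u).
Qed.
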